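(* Let $I=[x_1,x_N]$ with partition $x_1<\dots<x_N$, affine maps $u_i(x)=a_ix+b_i$ with $u_i(x_1)=x_i$, $u_i(x_N)=x_{i+1}$ ($i\in\mathbb{N}_{N-1}$), scaling functions $\alpha_i\in C(I)$ with $\|\alpha\|_\infty:=\max_i\|\alpha_i\|_\infty<1$, and $q\in(0,1]$. Equip $C(I)$ with the sup-norm. Then for every $n\in\mathbb{N}$ the operator $\mathcal{F}^{(q,\alpha)}_n:C(I)\to C(I)$, $\mathcal{F}^{(q,\alpha)}_n(f)=f^{(q,\alpha)}_n$, is linear and bounded.
   Context: For $q\in(0,1]$: $[k]_q=\frac{1-q^k}{1-q}$ ($q\neq1$), $[k]_1=k$, $[k]_q!=[k]_q\cdots[1]_q$, $[0]_q!=1$, $\binom{n}{k}_q=\frac{[n]_q!}{[k]_q![n-k]_q!}$. Quantum MKZ operator: $M_{n,q}f(x)=P_{n,q}(x)\sum_{k\ge0}\binom{n+k}{k}_q\left(\frac{x-x_1}{x_N-x_1}\right)^k f\!\left(x_1+(x_N-x_1)\frac{[k]_q}{[k+n]_q}\right)$ for $x_1\le x<x_N$, $M_{n,q}f(x_N)=f(x_N)$, with $P_{n,q}(x)=\prod_{j=0}^n(x_N-x_1-q^j(x-x_1))/(x_N-x_1)^{n+1}$. The quantum MKZ-fractal function $f^{(q,\alpha)}_n$ of $f\in C(I)$ is the unique $g\in C(I)$ with $g(u_i(x))=f(u_i(x))+\alpha_i(x)(g(x)-M_{n,q}f(x))$ for all $x\in I$, $i\in\mathbb{N}_{N-1}$.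 *)

(* Defs.v *)
From Stdlib Require Import Reals Lra ClassicalEpsilon.
From Coquelicot Require Import Coquelicot.
Open Scope R_scope.

Definition qint (q : R) (k : nat) : R :=
  if Req_EM_T q 1 then INR k else (1 - q ^ k) / (1 - q).

Fixpoint qfact (q : R) (k : nat) : R :=
  match k with
  | O => 1
  | S k' => qint q (S k') * qfact q k'
  end.

Definition qbinom (q : R) (n k : nat) : R :=
  qfact q n / (qfact q k * qfact q (n - k)).

Fixpoint Pprod (x1 xN q x : R) (n : nat) : R :=
  match n with
  | O => xN - x1 - q ^ 0 * (x - x1)
  | S n' => Pprod x1 xN q x n' * (xN - x1 - q ^ (S n') * (x - x1))
  end.

Definition Pnq (x1 xN q : R) (n : nat) (x : R) : R :=
  Pprod x1 xN q x n / (xN - x1) ^ (S n).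

Definition MKZ (x1 xN q : R) (n : nat) (f : R -> R) (x : R) : R :=
  if Rlt_dec x xN then
    Pnq x1 xN q n x *
    Series (fun k => qbinom q (n + k) k * ((x - x1) / (xN - x1)) ^ k *
                     f (x1 + (xN - x1) * (qint q k / qint q (k + n))))
  else f x.

Definition cont_on (a b : R) (f : R -> R) : Prop :=
  forall x, a <= x <= b -> forall eps, 0 < eps -> exists delta, 0 < delta /\
    forall y, a <= y <= b -> Rabs (y - x) < delta -> Rabs (f y - f x) < eps.

Definition is_qMKZ_fractal (N : nat) (xs a b : nat -> R) (alpha : nat -> R -> R)
  (q : R) (n : nat) (f g : R -> R) : Prop :=
  cont_on (xs 1%nat) (xs N) g /\
  forall i, (1 <= i <= N - 1)%nat -> forall x, xs 1%nat <= x <= xs N ->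
    g (a i * x + b i) = f (a i * x + b i)
      + alpha i x * (g x - MKZ (xs 1%nat) (xs N) q n f x).

Definition qMKZ_op (N : nat) (xs a b : nat -> R) (alpha : nat -> R -> R)
  (q : R) (n : nat) (f : R -> R) : R -> R :=
  epsilon (inhabits (fun _ : R => 0)) (is_qMKZ_fractal N xs a b alpha q n f).

(* Main.v *)
Require Import Defs.
From Stdlib Require Import Reals Lra Lia ClassicalEpsilon.
From Coquelicot Require Import Coquelicot.
Open Scope R_scope.

Section Q.
Variable q : R.
Hypothesis Hq : 0 < q <= 1.

Lemma qint_0 : qint q 0 = 0.
Proof. unfold qint; destruct Req_EM_T; simpl; [reflexivity| field; lra]. Qed.

Lemma qint_add a b : qint q (a + b) = qint q b + q ^ b * qint q a.
Proof.
  unfold qint; destruct Req_EM_T as [e|ne].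
  - subst. rewrite pow1, plus_INR. ring.
  - rewrite pow_add. field. lra.
Qed.

Lemma qint_S_pos m : 0 < qint q (S m).
Proof.
  unfold qint; destruct Req_EM_T as [e|ne].
  - apply lt_0_INR; lia.
  - assert (q < 1) by lra.
    assert (q ^ S m < 1).
    { apply pow_lt_1_compat; [lra| lia]. }
    apply Rdiv_lt_0_compat; lra.
Qed.

Lemma qint_ge0 m : 0 <= qint q m.
Proof. destruct m. rewrite qint_0; lra. apply Rlt_le, qint_S_pos. Qed.

Lemma qfact_pos m : 0 < qfact q m.
Proof.
  induction m; simpl; [lra|]. apply Rmult_lt_0_compat; auto. apply qint_S_pos.
Qed.

Lemma qbinom_nk n k : qbinom q (n + k) k = qfact q (n + k) / (qfact q k * qfact q n).
Proof. unfold qbinom. replace (n + k - k)%nat with n by lia. reflexivity. Qed.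

Lemma qbinom_pos n k : 0 < qbinom q (n + k) k.
Proof.
  rewrite qbinom_nk. apply Rdiv_lt_0_compat. apply qfact_pos.
  apply Rmult_lt_0_compat; apply qfact_pos.
Qed.

Lemma qbinom_k0 n : qbinom q (n + 0) 0 = 1.
Proof. rewrite qbinom_nk. simpl. rewrite Nat.add_0_r. field. apply Rgt_not_eq, qfact_pos. Qed.

Lemma qbinom_0k k : qbinom q (0 + k) k = 1.
Proof. rewrite qbinom_nk. simpl. field. apply Rgt_not_eq, qfact_pos. Qed.

Lemma qbinom_pascal n k :
  qbinom q (S n + S k) (S k) = q ^ (S n) * qbinom q (S n + k) k + qbinom q (n + S k) (S k).
Proof.
  rewrite !qbinom_nk.
  replace (S n + S k)%nat with (S (S (n + k))) by lia.
  replace (S n + k)%nat with (S (n + k)) by lia.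
  replace (n + S k)%nat with (S (n + k)) by lia.
  change (qfact q (S (S (n + k)))) with (qint q (S (S (n+k))) * qfact q (S (n + k))).
  change (qfact q (S k)) with (qint q (S k) * qfact q k).
  change (qfact q (S n)) with (qint q (S n) * qfact q n).
  replace (S (S (n + k))) with (S k + S n)%nat by lia.
  rewrite qint_add.
  pose proof (qint_S_pos k). pose proof (qint_S_pos n).
  pose proof (qfact_pos k). pose proof (qfact_pos n).
  field. repeat split; lra.
Qed.

Fixpoint prodq (n : nat) (t : R) : R :=
  match n with
  | O => 1 - q ^ 0 * t
  | S n' => prodq n' t * (1 - q ^ (S n') * t)
  end.

Lemma Pprod_prodq x1 xN x n : x1 < xN ->
  Pprod x1 xN q x n = (xN - x1) ^ (S n) * prodq n ((x - x1) / (xN - x1)).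
Proof.
  intros H. induction n; simpl.
  - field. lra.
  - rewrite IHn. simpl. field. lra.
Qed.

Lemma Pnq_prodq x1 xN x n : x1 < xN ->
  Pnq x1 xN q n x = prodq n ((x - x1) / (xN - x1)).
Proof.
  intros H. unfold Pnq. rewrite Pprod_prodq by auto. field.
  apply pow_nonzero. lra.
Qed.

Lemma qpow_bounds j : 0 < q ^ j <= 1.
Proof. split. apply pow_lt; lra. induction j; simpl; [lra|]. pose proof (pow_lt q j). nra. Qed.

Lemma prodq_bounds n t : 0 <= t <= 1 -> 0 <= prodq n t <= 1 - t.
Proof.
  intros Ht. induction n; simpl.
  - lra.
  - pose proof (qpow_bounds (S n)). simpl in H.
    assert (0 <= 1 - q * q ^ n * t <= 1) by nra. nra.
Qed.

Lemma prodq_pos n t : 0 <= t < 1 -> 0 < prodq n t.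
Proof.
  intros Ht. induction n; simpl.
  - lra.
  - pose proof (qpow_bounds (S n)). simpl in H.
    assert (0 < 1 - q * q ^ n * t) by nra. nra.
Qed.

Lemma prodq_0 n : prodq n 0 = 1.
Proof. induction n; simpl; [ring| rewrite IHn; ring]. Qed.

Lemma prodq_cont n t : continuity_pt (prodq n) t.
Proof.
  induction n; simpl.
  - apply continuity_pt_minus. apply continuity_pt_const; intros ? ?; reflexivity.
    apply continuity_pt_scal. apply continuity_pt_id.
  - apply continuity_pt_mult; auto.
    apply continuity_pt_minus. apply continuity_pt_const; intros ? ?; reflexivity.
    apply continuity_pt_scal. apply continuity_pt_id.
Qed.

End Q.


Lemma is_series_lim (a : nat -> R) (l : R) : is_series a l -> is_lim_seq (sum_n a) l.
Proof. intro H. exact H. Qed.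

Lemma partial_le_series (b : nat -> R) B K :
  (forall k, 0 <= b k) -> is_series b B -> sum_f_R0 b K <= B.
Proof.
  intros Hb HB. apply is_series_lim in HB.
  apply (is_lim_seq_incr_n _ K) in HB.
  assert (H := is_lim_seq_le (fun _ => sum_f_R0 b K) (fun n => sum_n b (n + K)) (sum_f_R0 b K) B).
  simpl in H. apply H; [| apply is_lim_seq_const | exact HB].
  intro n. rewrite sum_n_Reals. induction n; simpl; [lra|].
  replace (S (n + K)) with (n + K + 1)%nat by lia. rewrite Nat.add_1_r. simpl. specialize (Hb (S (n+K))). lra.
Qed.

Lemma ex_series_pos_bounded (a : nat -> R) B :
  (forall k, 0 <= a k) -> (forall K, sum_f_R0 a K <= B) -> ex_series a.
Proof.
  intros Ha HB. apply ex_series_Reals_1. apply growing_cv.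
  - intro n. simpl. specialize (Ha (S n)). lra.
  - exists B. intros x [i ->]. apply HB.
Qed.

Section Q2.
Variable q : R.
Hypothesis Hq : 0 < q <= 1.

Definition w n k := qbinom q (n + k) k.

Lemma gen_series n t : 0 <= t < 1 ->
  is_series (fun k => w n k * t ^ k) (/ prodq q n t).
Proof.
  intros Ht. induction n.
  - simpl. rewrite Rmult_1_l.
    eapply is_series_ext; [| apply is_series_geom; rewrite Rabs_right; lra].
    intro k. simpl. unfold w. rewrite qbinom_0k by auto. ring.
  - set (a := fun k => w (S n) k * t ^ k).
    set (b := fun k => w n k * t ^ k).
    set (B := / prodq q n t) in IHn.
    set (rho := q ^ (S n) * t).
    pose proof (qpow_bounds q Hq (S n)) as Hqp.
    assert (Hrho : 0 <= rho < 1) by (unfold rho; nra).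
    assert (Hrec : forall k, a (S k) = b (S k) + rho * a k).
    { intro k. unfold a, b, rho, w. rewrite qbinom_pascal by auto. simpl. ring. }
    assert (Ha0 : a 0%nat = 1).
    { unfold a, w. rewrite qbinom_k0 by auto. simpl. ring. }
    assert (Hb0 : b 0%nat = 1).
    { unfold b, w. rewrite qbinom_k0 by auto. simpl. ring. }
    assert (Hapos : forall k, 0 <= a k).
    { intro k. unfold a, w. apply Rmult_le_pos. apply Rlt_le, qbinom_pos; auto.
      apply pow_le; lra. }
    assert (Hbpos : forall k, 0 <= b k).
    { intro k. unfold b, w. apply Rmult_le_pos. apply Rlt_le, qbinom_pos; auto.
      apply pow_le; lra. }
    assert (Hpart : forall K, sum_f_R0 a K <= sum_f_R0 b K + rho * sum_f_R0 a K).
    { assert (Heq : forall K, sum_f_R0 a (S K) = sum_f_R0 b (S K) + rho * sum_f_R0 a K).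
      { intro K0; induction K0; simpl. rewrite Hrec, Ha0, Hb0. ring.
        simpl in IHK0. rewrite (Hrec (S K0)). rewrite Rmult_plus_distr_l. lra. }
      destruct K. simpl. rewrite Ha0, Hb0. nra.
      rewrite (Heq K) at 1. change (sum_f_R0 a (S K)) with (sum_f_R0 a K + a (S K)). pose proof (Hapos (S K)). nra. }
    assert (Hex : ex_series a).
    { apply (ex_series_pos_bounded a (B / (1 - rho))); auto.
      intro K. specialize (Hpart K). pose proof (partial_le_series b B K Hbpos IHn).
      apply Rmult_le_reg_r with (1 - rho). lra.
      unfold Rdiv. rewrite Rmult_assoc, Rinv_l by lra. nra. }
    assert (HexS : ex_series (fun k => a (S k))) by (apply (proj1 (ex_series_incr_1 a)); exact Hex).
    assert (HexbS : ex_series (fun k => b (S k))) by (apply (proj1 (ex_series_incr_1 b)); eexists; eauto).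
    assert (HA : Series a = 1 + (B - 1) + rho * Series a).
    { pose proof (Series_incr_1 a Hex) as H1. rewrite Ha0 in H1.
      assert (H2 : Series (fun k => a (S k)) = (B - 1) + rho * Series a).
      { rewrite (Series_ext _ (fun k => b (S k) + rho * a k)) by auto.
        rewrite Series_plus; [| exact HexbS | apply (ex_series_scal_l rho a Hex)].
        rewrite Series_scal_l. f_equal.
        pose proof IHn as IHn'.
        apply (is_series_unique b B) in IHn.
        rewrite Series_incr_1 in IHn by (eexists; eauto). rewrite Hb0 in IHn. lra. }
      lra. }
    assert (Series a = B / (1 - rho)).
    { field_simplify_eq; [| lra]. lra. }
    replace (/ prodq q (S n) t) with (B / (1 - rho)).
    rewrite <- H. apply Series_correct; auto.
    assert (HH : 1 - q ^ S n * t > 0) by (unfold rho in Hrho; lra).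
    unfold B, rho. simpl. simpl in HH. pose proof (prodq_pos q Hq n t Ht).
    field. split; lra.
Qed.

End Q2.


Lemma cpt_eps F x : continuity_pt F x ->
  forall eps, 0 < eps -> exists d, 0 < d /\ forall y, Rabs (y - x) < d -> Rabs (F y - F x) < eps.
Proof.
  intros H eps Heps. destruct (H eps Heps) as [d [Hd Hy]]. exists d; split; auto.
  intros y Hyx. destruct (Req_dec y x) as [->|ne].
  - unfold Rminus. rewrite Rplus_opp_r, Rabs_R0. lra.
  - apply (Hy y). split; [split; [exact I| auto] | exact Hyx].
Qed.

Lemma cont_bounded a b f : a <= b -> cont_on a b f ->
  exists M, forall y, a <= y <= b -> Rabs (f y) <= M.
Proof.
  intros Hab Hf.
  set (cl := fun y => Rmax a (Rmin y b)).
  assert (Hcl : forall y, a <= cl y <= b).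
  { intro y. unfold cl. split. apply Rmax_l. apply Rmax_lub; auto. apply Rmin_r. }
  assert (Hcl2 : forall y, a <= y <= b -> cl y = y).
  { intros y Hy. unfold cl. rewrite Rmin_left by lra. rewrite Rmax_right; lra. }
  assert (Hlip : forall y c, a <= c <= b -> Rabs (cl y - c) <= Rabs (y - c)).
  { intros y c Hc. unfold cl. unfold Rmax, Rmin.
    repeat destruct Rle_dec; unfold Rabs; repeat destruct Rcase_abs; lra. }
  set (F := fun y => Rabs (f (cl y))).
  assert (HF : forall c, a <= c <= b -> continuity_pt F c).
  { intros c Hc eps Heps.
    destruct (Hf c Hc eps Heps) as [d [Hd Hy]]. exists d; split; auto.
    intros x [_ Hx]. simpl in *. unfold R_dist in *. unfold F.
    rewrite (Hcl2 c Hc).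
    eapply Rle_lt_trans. apply Rabs_triang_inv2.
    apply Hy. apply Hcl. eapply Rle_lt_trans. apply Hlip; auto. auto. }
  destruct (continuity_ab_maj F a b Hab HF) as [Mx [HM _]].
  exists (F Mx). intros y Hy. specialize (HM y Hy). unfold F in HM. rewrite Hcl2 in HM; auto.
Qed.

Lemma exs_scal (c : R) (a : nat -> R) : ex_series a -> ex_series (fun k => c * a k).
Proof.
  intros H. destruct (ex_series_scal_r c a H) as [l Hl]. exists l.
  eapply is_series_ext; [| exact Hl]. intro k. simpl. ring.
Qed.

Section MK.
Variables (x1 xN q : R) (n : nat).
Hypothesis Hx : x1 < xN.
Hypothesis Hq : 0 < q <= 1.
Hypothesis Hn : (1 <= n)%nat.

Definition tt x := (x - x1) / (xN - x1).
Definition zz k := x1 + (xN - x1) * (qint q k / qint q (k + n)).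
Definition coef (f : R -> R) k := w q n k * f (zz k).

Lemma tt_bounds x : x1 <= x < xN -> 0 <= tt x < 1.
Proof.
  intros H. unfold tt. split. apply Rdiv_le_0_compat; lra.
  apply Rmult_lt_reg_r with (xN - x1). lra. unfold Rdiv. rewrite Rmult_assoc, Rinv_l; lra.
Qed.

Lemma ratio_bounds k : 0 <= qint q k / qint q (k + n) <= 1.
Proof.
  assert (Hp : 0 < qint q (k + n)).
  { destruct n. lia. rewrite Nat.add_succ_r. apply qint_S_pos; auto. }
  pose proof (qint_ge0 q Hq k). split. apply Rdiv_le_0_compat; lra.
  apply Rmult_le_reg_r with (qint q (k + n)). lra. unfold Rdiv. rewrite Rmult_assoc, Rinv_l by lra.
  rewrite Rmult_1_l. rewrite (Nat.add_comm k n), qint_add by auto.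
  pose proof (qint_ge0 q Hq n). pose proof (qpow_bounds q Hq k). nra.
Qed.

Lemma zz_in k : x1 <= zz k <= xN.
Proof. unfold zz. pose proof (ratio_bounds k). nra. Qed.

Lemma MKZ_lt f x : x < xN ->
  MKZ x1 xN q n f x = prodq q n (tt x) * PSeries (coef f) (tt x).
Proof.
  intros H. unfold MKZ. destruct Rlt_dec; [|contradiction].
  rewrite Pnq_prodq by auto. f_equal. unfold PSeries. apply Series_ext. intro k.
  unfold coef, w, zz, tt. ring.
Qed.

Lemma MKZ_xN f : MKZ x1 xN q n f xN = f xN.
Proof. unfold MKZ. destruct Rlt_dec; [lra|auto]. Qed.

Lemma MKZ_x1 f : MKZ x1 xN q n f x1 = f x1.
Proof.
  rewrite MKZ_lt by auto. unfold tt. replace ((x1 - x1) / (xN - x1)) with 0 by (field; lra).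
  rewrite prodq_0, PSeries_0. unfold coef, zz, w. rewrite qint_0 by auto.
  replace (n + 0)%nat with (n + 0)%nat by reflexivity. rewrite qbinom_k0 by auto.
  replace (x1 + (xN - x1) * (0 / qint q (0 + n))) with x1 by (unfold Rdiv; ring). ring.
Qed.

Definition bnd (f : R -> R) M := forall y, x1 <= y <= xN -> Rabs (f y) <= M.

Lemma coef_abs_le f M t k : bnd f M -> 0 <= t ->
  Rabs (coef f k * t ^ k) <= M * (w q n k * t ^ k).
Proof.
  intros Hf Ht. unfold coef. rewrite !Rabs_mult. rewrite (Rabs_pos_eq (t ^ k)) by (apply pow_le; lra).
  rewrite (Rabs_pos_eq (w q n k)) by (apply Rlt_le, qbinom_pos; auto).
  pose proof (Hf (zz k) (zz_in k)). pose proof (pow_le t k Ht).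
  pose proof (qbinom_pos q Hq n k). unfold w in *.
  replace (qbinom q (n + k) k * Rabs (f (zz k)) * t ^ k) with (Rabs (f (zz k)) * (qbinom q (n + k) k * t ^ k)) by ring.
  apply Rmult_le_compat_r; auto. apply Rmult_le_pos; lra.
Qed.

Lemma ex_series_w t : 0 <= t < 1 -> ex_series (fun k => w q n k * t ^ k).
Proof. intros Ht. eexists. apply gen_series; auto. Qed.

Lemma Series_w t : 0 <= t < 1 -> Series (fun k => w q n k * t ^ k) = / prodq q n t.
Proof. intros Ht. apply is_series_unique, gen_series; auto. Qed.

Lemma ex_series_coef_abs f M t : bnd f M -> 0 <= t < 1 ->
  ex_series (fun k => Rabs (coef f k * t ^ k)).
Proof.
  intros Hf Ht. apply (@ex_series_le R_AbsRing R_CompleteNormedModule _ (fun k => M * (w q n k * t ^ k))).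
  - intro k. unfold norm; simpl. unfold abs; simpl. rewrite Rabs_Rabsolu.
    apply coef_abs_le; auto; lra.
  - apply (exs_scal M). apply ex_series_w; auto.
Qed.

Lemma ex_series_coef f M t : bnd f M -> 0 <= t < 1 ->
  ex_series (fun k => coef f k * t ^ k).
Proof. intros. apply ex_series_Rabs. eapply ex_series_coef_abs; eauto. Qed.

Lemma MKZ_bound f M x : bnd f M -> x1 <= x <= xN -> Rabs (MKZ x1 xN q n f x) <= M.
Proof.
  intros Hf Hxx. destruct (Req_dec x xN) as [->|ne].
  - rewrite MKZ_xN. apply Hf; lra.
  - assert (Ht : 0 <= tt x < 1) by (apply tt_bounds; lra).
    rewrite MKZ_lt by lra. rewrite Rabs_mult.
    pose proof (prodq_pos q Hq n (tt x) Ht) as Hp.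
    rewrite (Rabs_pos_eq (prodq q n (tt x))) by lra.
    unfold PSeries. eapply Rle_trans.
    { apply Rmult_le_compat_l. lra. apply Series_Rabs. eapply ex_series_coef_abs; eauto. }
    eapply Rle_trans.
    { apply Rmult_le_compat_l. lra.
      apply (Series_le _ (fun k => M * (w q n k * (tt x) ^ k))).
      intro k. split. apply Rabs_pos. apply coef_abs_le; auto; lra.
      apply (exs_scal M). apply ex_series_w; auto. }
    rewrite Series_scal_l, Series_w by auto. right. field. lra.
Qed.

Lemma MKZ_lin f g Mf Mg s t x : bnd f Mf -> bnd g Mg -> x1 <= x <= xN ->
  MKZ x1 xN q n (fun y => s * f y + t * g y) x
  = s * MKZ x1 xN q n f x + t * MKZ x1 xN q n g x.
Proof.
  intros Hf Hg Hxx. destruct (Req_dec x xN) as [->|ne].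
  - rewrite !MKZ_xN. reflexivity.
  - assert (Ht : 0 <= tt x < 1) by (apply tt_bounds; lra).
    rewrite !MKZ_lt by lra. unfold PSeries.
    rewrite (Series_ext _ (fun k => s * (coef f k * tt x ^ k) + t * (coef g k * tt x ^ k))).
    2:{ intro k. unfold coef. ring. }
    rewrite Series_plus. rewrite !Series_scal_l. ring.
    apply (exs_scal s). eapply ex_series_coef; eauto.
    apply (exs_scal t). eapply ex_series_coef; eauto.
Qed.

End MK.


Lemma term_le_series (b : nat -> R) B k :
  (forall k, 0 <= b k) -> is_series b B -> b k <= B.
Proof.
  intros Hb HB. eapply Rle_trans; [| apply (partial_le_series b B k Hb HB)].
  destruct k. simpl; lra. simpl. pose proof (cond_pos_sum b k Hb). lra.
Qed.

Section MK2.
Variables (x1 xN q : R) (n : nat).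
Hypothesis Hx : x1 < xN.
Hypothesis Hq : 0 < q <= 1.
Hypothesis Hn : (1 <= n)%nat.

Lemma radius_coef f M t0 : bnd x1 xN f M -> 0 <= t0 < 1 ->
  Rbar_lt (Rabs t0) (CV_radius (coef x1 xN q n f)).
Proof.
  intros Hf Ht.
  set (r := (t0 + 1) / 2).
  assert (Hr : 0 <= r < 1) by (unfold r; lra).
  assert (HE : exists M', forall k, Rabs (coef x1 xN q n f k * r ^ k) <= M').
  { exists (M * / prodq q n r). intro k. eapply Rle_trans. apply coef_abs_le; eauto; lra.
    apply Rmult_le_compat_l.
    - eapply Rle_trans; [apply Rabs_pos | apply (Hf x1); lra].
    - apply (term_le_series (fun j => w q n j * r ^ j)). intro j. apply Rmult_le_pos. apply Rlt_le, qbinom_pos; auto.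
      apply pow_le; lra. apply gen_series; auto. }
  pose proof (CV_radius_bounded (coef x1 xN q n f)) as [Hub _].
  specialize (Hub r HE).
  rewrite Rabs_pos_eq by lra.
  assert (t0 < r) by (unfold r; lra).
  destruct (CV_radius (coef x1 xN q n f)); simpl in *; auto; lra.
Qed.

Lemma tt_cont x : continuity_pt (tt x1 xN) x.
Proof.
  unfold tt. apply (continuity_pt_div (fun y => y - x1) (fun _ => xN - x1)).
  apply continuity_pt_minus. apply continuity_pt_id. apply continuity_pt_const; intros ? ?; auto.
  apply continuity_pt_const; intros ? ?; auto. lra.
Qed.

Lemma zz_tends d : 0 < d -> exists K, forall k, (K <= k)%nat -> xN - zz x1 xN q n k < d.
Proof.
  intros Hd.
  set (e := d / (xN - x1)).
  assert (He : 0 < e) by (unfold e; apply Rdiv_lt_0_compat; lra).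
  assert (Hkey : forall k, xN - zz x1 xN q n k = (xN - x1) * (q ^ k * qint q n / qint q (k + n))).
  { intro k. unfold zz. assert (Hp : 0 < qint q (k + n)).
    { destruct n. lia. rewrite Nat.add_succ_r. apply qint_S_pos; auto. }
    rewrite (Nat.add_comm k n) in *. rewrite qint_add in * by auto. field. lra. }
  assert (suff : exists K, forall k, (K <= k)%nat -> q ^ k * qint q n / qint q (k + n) < e).
  { destruct (Req_dec q 1) as [E|NE].
    - subst q. destruct (archimed_cor1 (e / INR n)) as [N [HN1 HN2]].
      { apply Rdiv_lt_0_compat; auto. apply lt_0_INR; lia. }
      exists N. intros k Hk. unfold qint. destruct Req_EM_T; [|lra].
      rewrite pow1, Rmult_1_l. rewrite plus_INR.
      assert (HnR : 0 < INR n) by (apply lt_0_INR; lia).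
      assert (HNk : INR N <= INR k) by (apply le_INR; lia).
      assert (HN0 : 0 < INR N) by (apply lt_0_INR; lia).
      assert (INR n < e * INR N).
      { apply Rmult_lt_compat_r with (r := INR n) in HN1; auto.
        unfold Rdiv in HN1. rewrite Rmult_assoc, Rinv_l in HN1 by lra.
        apply Rmult_lt_compat_l with (r := INR N) in HN1; auto.
        rewrite <- Rmult_assoc, Rinv_r, Rmult_1_l, Rmult_1_r in HN1 by lra. lra. }
      apply Rmult_lt_reg_r with (INR k + INR n). lra.
      unfold Rdiv. rewrite Rmult_assoc, Rinv_l by lra. nra.
    - assert (Hq1 : q < 1) by lra.
      destruct (pow_lt_1_zero q ltac:(rewrite Rabs_pos_eq; lra) e He) as [K HK].
      exists K. intros k Hk. specialize (HK k Hk). rewrite Rabs_pos_eq in HK by (apply pow_le; lra).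
      assert (Hp : 0 < qint q n) by (destruct n; [lia| apply qint_S_pos; auto]).
      assert (Hle : qint q n <= qint q (k + n)).
      { rewrite qint_add by auto. pose proof (qint_ge0 q Hq k). pose proof (qpow_bounds q Hq n). nra. }
      apply Rle_lt_trans with (q ^ k); auto.
      apply Rmult_le_reg_r with (qint q (k + n)). lra.
      unfold Rdiv. rewrite Rmult_assoc, Rinv_l by lra. pose proof (qpow_bounds q Hq k). nra. }
  destruct suff as [K HK]. exists K. intros k Hk. rewrite Hkey.
  specialize (HK k Hk). unfold e in HK.
  apply Rmult_lt_compat_l with (r := xN - x1) in HK; [|lra].
  replace ((xN - x1) * (d / (xN - x1))) with d in HK by (field; lra). exact HK.
Qed.

End MK2.


Lemma pow_le_1 t k : 0 <= t <= 1 -> t ^ k <= 1.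
Proof. intros H. induction k; simpl. lra. pose proof (pow_le t k (proj1 H)). nra. Qed.

Section MK3.
Variables (x1 xN q : R) (n : nat).
Hypothesis Hx : x1 < xN.
Hypothesis Hq : 0 < q <= 1.
Hypothesis Hn : (1 <= n)%nat.

Lemma MKZ_cont f : cont_on x1 xN f -> cont_on x1 xN (MKZ x1 xN q n f).
Proof.
  intros Hf. destruct (cont_bounded x1 xN f) as [M HM]; [lra|auto|].
  assert (HM0 : 0 <= M) by (eapply Rle_trans; [apply Rabs_pos| apply (HM x1); lra]).
  intros x Hxx eps Heps.
  destruct (Rlt_dec x xN) as [Hlt|Hge].
  - assert (Ht : 0 <= tt x1 xN x < 1) by (apply tt_bounds; lra).
    assert (HC : continuity_pt (mult_fct (comp (prodq q n) (tt x1 xN))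
                   (comp (PSeries (coef x1 xN q n f)) (tt x1 xN))) x).
    { apply continuity_pt_mult; apply continuity_pt_comp; try apply tt_cont; auto.
      apply prodq_cont. apply PSeries_continuity. eapply radius_coef; eauto. }
    destruct (cpt_eps _ _ HC eps Heps) as [d [Hd Hy]].
    exists (Rmin d (xN - x)). split. apply Rmin_pos; lra.
    intros y Hyy Hyd.
    assert (y < xN). { apply Rabs_def2 in Hyd. pose proof (Rmin_r d (xN - x)). lra. }
    rewrite !MKZ_lt by auto.
    apply (Hy y). eapply Rlt_le_trans; [exact Hyd| apply Rmin_l].
  - assert (x = xN) by lra. subst x.
    destruct (Hf xN ltac:(lra) (eps / 2) ltac:(lra)) as [d1 [Hd1 Hf1]].
    destruct (zz_tends x1 xN q n Hx Hq Hn d1 Hd1) as [K HK].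
    set (W := sum_f_R0 (fun k => w q n k) K).
    assert (HW : 0 <= W).
    { apply cond_pos_sum. intro k. apply Rlt_le, qbinom_pos; auto. }
    set (dl := (xN - x1) * eps / (4 * (M * W + 1))).
    assert (Hdl : 0 < dl).
    { unfold dl. apply Rdiv_lt_0_compat. nra. nra. }
    exists dl. split; auto. intros y Hyy Hyd.
    destruct (Req_dec y xN) as [->|ne].
    { unfold Rminus. rewrite Rplus_opp_r, Rabs_R0. lra. }
    assert (Hylt : y < xN) by lra.
    set (t := tt x1 xN y).
    assert (Ht : 0 <= t < 1) by (apply tt_bounds; lra).
    set (P := prodq q n t).
    assert (HP : 0 < P) by (apply prodq_pos; auto).
    assert (HP1 : P <= 1 - t) by (apply prodq_bounds; auto; lra).
    rewrite MKZ_lt by auto. rewrite MKZ_xN. fold t. fold P.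
    set (b := fun k => w q n k * t ^ k).
    set (d := fun k => b k * (f (zz x1 xN q n k) - f xN)).
    assert (Hbpos : forall k, 0 <= b k).
    { intro k. unfold b. apply Rmult_le_pos. apply Rlt_le, qbinom_pos; auto. apply pow_le; lra. }
    assert (Hexb : ex_series b) by (apply ex_series_w; auto).
    assert (HSb : Series b = / P) by (apply Series_w; auto).
    assert (Hdabs : forall k, Rabs (d k) <= b k * (2 * M)).
    { intro k. unfold d. rewrite Rabs_mult, (Rabs_pos_eq (b k)) by auto.
      apply Rmult_le_compat_l; auto.
      pose proof (HM (zz x1 xN q n k) (zz_in x1 xN q n Hx Hq Hn k)). pose proof (HM xN ltac:(lra)).
      unfold Rminus. eapply Rle_trans. apply Rabs_triang. rewrite Rabs_Ropp. lra. }
    assert (Hexd : ex_series (fun k => Rabs (d k))).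
    { apply (@ex_series_le R_AbsRing R_CompleteNormedModule _ (fun k => b k * (2 * M))).
      intro k. unfold norm; simpl. unfold abs; simpl. rewrite Rabs_Rabsolu. auto.
      apply ex_series_scal_r. auto. }
    assert (Hkey : P * PSeries (coef x1 xN q n f) t - f xN = P * Series d).
    { assert (Series d = PSeries (coef x1 xN q n f) t - Series b * f xN).
      { rewrite <- Series_scal_r. unfold PSeries. rewrite <- Series_minus.
        apply Series_ext. intro k. unfold d, b, coef. ring.
        eapply ex_series_coef; eauto. apply ex_series_scal_r; auto. }
      rewrite H, HSb. field. lra. }
    rewrite Hkey.
    assert (Hsplit : Series (fun k => Rabs (d k)) =
        sum_f_R0 (fun k => Rabs (d k)) K + Series (fun j => Rabs (d (S K + j)%nat))).
    { rewrite (Series_incr_n _ (S K)) by (auto; lia). reflexivity. }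
    assert (Hhead : sum_f_R0 (fun k => Rabs (d k)) K <= 2 * M * W).
    { unfold W. rewrite scal_sum. apply sum_Rle. intros k _.
      eapply Rle_trans. apply Hdabs. unfold b.
      apply Rmult_le_compat_r. lra.
      pose proof (pow_le_1 t k ltac:(lra)). pose proof (qbinom_pos q Hq n k). unfold w in *.
      pose proof (pow_le t k (proj1 Ht)). nra. }
    assert (Hexb' : ex_series (fun j => b (S K + j)%nat)).
    { apply (ex_series_incr_n b (S K)). auto. }
    assert (Htail : Series (fun j => Rabs (d (S K + j)%nat)) <= eps / 2 * / P).
    { eapply Rle_trans.
      apply (Series_le _ (fun j => eps / 2 * b (S K + j)%nat)).
      - intro j. split. apply Rabs_pos. unfold d.
        rewrite Rabs_mult, (Rabs_pos_eq (b _)) by auto. rewrite Rmult_comm.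
        apply Rmult_le_compat_r; auto. apply Rlt_le. apply Hf1. apply zz_in; auto.
        pose proof (zz_in x1 xN q n Hx Hq Hn (S K + j)).
        assert (xN - zz x1 xN q n (S K + j) < d1) by (apply HK; lia).
        rewrite Rabs_left1; lra.
      - apply exs_scal. auto.
      - rewrite Series_scal_l. apply Rmult_le_compat_l. lra.
        rewrite <- HSb. rewrite (Series_incr_n b (S K)) by (auto; lia).
        pose proof (cond_pos_sum b (Init.Nat.pred (S K)) Hbpos). lra. }
    assert (Habs : Rabs (Series d) <= 2 * M * W + eps / 2 * / P).
    { eapply Rle_trans. apply Series_Rabs. auto. lra. }
    rewrite Rabs_mult, Rabs_pos_eq by lra.
    assert (H1t : 1 - t < eps / (4 * (M * W + 1))).
    { unfold t, tt. apply Rabs_def2 in Hyd. destruct Hyd as [_ Hyd].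
      unfold dl in Hyd.
      replace (1 - (y - x1) / (xN - x1)) with ((xN - y) / (xN - x1)) by (field; lra).
      apply Rmult_lt_reg_r with (xN - x1). lra.
      unfold Rdiv at 1. rewrite Rmult_assoc, Rinv_l, Rmult_1_r by lra.
      replace (eps / (4 * (M * W + 1)) * (xN - x1)) with ((xN - x1) * eps / (4 * (M * W + 1))) by (field; nra).
      lra. }
    assert (HMW : 0 <= M * W) by nra.
    assert (P * (2 * M * W) <= eps / 2 * (M * W / (M * W + 1))).
    { apply Rle_trans with ((1 - t) * (2 * M * W)). nra.
      apply Rle_trans with (eps / (4 * (M * W + 1)) * (2 * M * W)). nra.
      right. field. nra. }
    assert (M * W / (M * W + 1) < 1).
    { apply Rmult_lt_reg_r with (M * W + 1). lra. unfold Rdiv. rewrite Rmult_assoc, Rinv_l by lra. lra. }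
    eapply Rle_lt_trans. apply Rmult_le_compat_l. lra. exact Habs.
    rewrite Rmult_plus_distr_l.
    replace (P * (eps / 2 * / P)) with (eps / 2) by (field; lra).
    nra.
Qed.

End MK3.


Lemma cont_on_ext a b f g : (forall x, a <= x <= b -> f x = g x) -> cont_on a b f -> cont_on a b g.
Proof.
  intros E Hf x Hx eps He. destruct (Hf x Hx eps He) as [d [Hd Hy]].
  exists d; split; auto. intros y Hyy Hyd. rewrite <- !E by auto. auto.
Qed.

Lemma cont_on_const a b c : cont_on a b (fun _ => c).
Proof. intros x Hx eps He. exists 1. split. lra. intros. unfold Rminus. rewrite Rplus_opp_r, Rabs_R0. auto. Qed.

Lemma cont_on_plus a b f g : cont_on a b f -> cont_on a b g -> cont_on a b (fun x => f x + g x).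
Proof.
  intros Hf Hg x Hx eps He.
  destruct (Hf x Hx (eps/2) ltac:(lra)) as [d1 [Hd1 H1]].
  destruct (Hg x Hx (eps/2) ltac:(lra)) as [d2 [Hd2 H2]].
  exists (Rmin d1 d2). split. apply Rmin_pos; auto.
  intros y Hy Hyd. pose proof (Rmin_l d1 d2). pose proof (Rmin_r d1 d2).
  specialize (H1 y Hy ltac:(lra)). specialize (H2 y Hy ltac:(lra)).
  replace (f y + g y - (f x + g x)) with ((f y - f x) + (g y - g x)) by ring.
  eapply Rle_lt_trans. apply Rabs_triang. lra.
Qed.

Lemma cont_on_mult a b f g : a <= b -> cont_on a b f -> cont_on a b g -> cont_on a b (fun x => f x * g x).
Proof.
  intros Hab Hf Hg x Hx eps He.
  destruct (cont_bounded a b f Hab Hf) as [M HM].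
  assert (HM0 : 0 <= M) by (eapply Rle_trans; [apply Rabs_pos| apply (HM x Hx)]).
  set (e1 := eps / (2 * (M + 1))).
  set (e2 := eps / (2 * (Rabs (g x) + 1))).
  pose proof (Rabs_pos (g x)).
  assert (He1 : 0 < e1) by (unfold e1; apply Rdiv_lt_0_compat; lra).
  assert (He2 : 0 < e2) by (unfold e2; apply Rdiv_lt_0_compat; lra).
  destruct (Hg x Hx e1 He1) as [d1 [Hd1 H1]].
  destruct (Hf x Hx e2 He2) as [d2 [Hd2 H2]].
  exists (Rmin d1 d2). split. apply Rmin_pos; auto.
  intros y Hy Hyd. pose proof (Rmin_l d1 d2). pose proof (Rmin_r d1 d2).
  specialize (H1 y Hy ltac:(lra)). specialize (H2 y Hy ltac:(lra)).
  replace (f y * g y - f x * g x) with (f y * (g y - g x) + g x * (f y - f x)) by ring.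
  eapply Rle_lt_trans. apply Rabs_triang. rewrite !Rabs_mult.
  specialize (HM y Hy).
  assert (A1 : Rabs (f y) * Rabs (g y - g x) <= M * e1).
  { apply Rmult_le_compat; try apply Rabs_pos; lra. }
  assert (A2 : Rabs (g x) * Rabs (f y - f x) <= Rabs (g x) * e2).
  { apply Rmult_le_compat_l; lra. }
  assert (B1 : M * e1 < eps / 2).
  { unfold e1. apply Rmult_lt_reg_r with (2 * (M + 1)). lra.
    replace (M * (eps / (2 * (M + 1))) * (2 * (M + 1))) with (M * eps) by (field; lra). nra. }
  assert (B2 : Rabs (g x) * e2 < eps / 2).
  { unfold e2. apply Rmult_lt_reg_r with (2 * (Rabs (g x) + 1)). lra.
    replace (Rabs (g x) * (eps / (2 * (Rabs (g x) + 1))) * (2 * (Rabs (g x) + 1))) with (Rabs (g x) * eps) by (field; lra). nra. }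
  lra.
Qed.

Lemma cont_on_scal a b s f : cont_on a b f -> cont_on a b (fun x => s * f x).
Proof.
  intros Hf x Hx eps He.
  destruct (Hf x Hx (eps / (Rabs s + 1))) as [d [Hd H]].
  { apply Rdiv_lt_0_compat; auto. pose proof (Rabs_pos s). lra. }
  exists d; split; auto. intros y Hy Hyd. specialize (H y Hy Hyd).
  rewrite <- Rmult_minus_distr_l, Rabs_mult. pose proof (Rabs_pos s).
  apply Rle_lt_trans with (Rabs s * (eps / (Rabs s + 1))).
  apply Rmult_le_compat_l; lra.
  apply Rmult_lt_reg_r with (Rabs s + 1). lra.
  replace (Rabs s * (eps / (Rabs s + 1)) * (Rabs s + 1)) with (Rabs s * eps) by (field; lra). nra.
Qed.

Lemma cont_on_minus a b f g : cont_on a b f -> cont_on a b g -> cont_on a b (fun x => f x - g x).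
Proof.
  intros Hf Hg. apply (cont_on_ext a b (fun x => f x + (-1) * g x)).
  intros; ring. apply cont_on_plus; auto. apply cont_on_scal; auto.
Qed.

Lemma cont_on_affine a b c d f (al be : R) :
  (forall x, a <= x <= b -> c <= al * x + be <= d) -> cont_on c d f ->
  cont_on a b (fun x => f (al * x + be)).
Proof.
  intros Hm Hf x Hx eps He.
  destruct (Hf (al * x + be) (Hm x Hx) eps He) as [d1 [Hd1 H]].
  exists (d1 / (Rabs al + 1)). split.
  { apply Rdiv_lt_0_compat; auto. pose proof (Rabs_pos al). lra. }
  intros y Hy Hyd. apply H. apply Hm; auto.
  replace (al * y + be - (al * x + be)) with (al * (y - x)) by ring.
  rewrite Rabs_mult. pose proof (Rabs_pos al). pose proof (Rabs_pos (y - x)).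
  apply Rle_lt_trans with ((Rabs al + 1) * Rabs (y - x)). nra.
  apply Rmult_lt_reg_r with (/ (Rabs al + 1)). apply Rinv_0_lt_compat; lra.
  rewrite Rmult_comm, <- Rmult_assoc, Rinv_l, Rmult_1_l by lra. exact Hyd.
Qed.

Lemma cont_on_glue a b c f : a <= b <= c -> cont_on a b f -> cont_on b c f -> cont_on a c f.
Proof.
  intros Habc H1 H2 x Hx eps He.
  destruct (Rlt_le_dec x b) as [Hxb|Hxb].
  - destruct (H1 x ltac:(lra) eps He) as [d [Hd H]].
    exists (Rmin d (b - x)). split. apply Rmin_pos; lra.
    intros y Hy Hyd. pose proof (Rmin_l d (b - x)). pose proof (Rmin_r d (b - x)).
    apply Rabs_def2 in Hyd as Hyd'. apply H. lra. lra.
  - destruct (Rle_lt_dec x b) as [Hxb2|Hxb2].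
    + assert (x = b) by lra. subst x.
      destruct (H1 b ltac:(lra) eps He) as [d1 [Hd1 G1]].
      destruct (H2 b ltac:(lra) eps He) as [d2 [Hd2 G2]].
      exists (Rmin d1 d2). split. apply Rmin_pos; auto.
      intros y Hy Hyd. pose proof (Rmin_l d1 d2). pose proof (Rmin_r d1 d2).
      destruct (Rle_dec y b). apply G1; lra. apply G2; lra.
    + destruct (H2 x ltac:(lra) eps He) as [d [Hd H]].
      exists (Rmin d (x - b)). split. apply Rmin_pos; lra.
      intros y Hy Hyd. pose proof (Rmin_l d (x - b)). pose proof (Rmin_r d (x - b)).
      apply Rabs_def2 in Hyd as Hyd'. apply H. lra. lra.
Qed.

Lemma le_of_small c K z : 0 <= c < 1 -> 0 <= K -> (forall k, z <= c ^ k * K) -> z <= 0.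
Proof.
  intros Hc HK H. destruct (Rle_dec z 0) as [|nz]; auto. exfalso.
  assert (Hz : 0 < z) by lra.
  destruct (pow_lt_1_zero c ltac:(rewrite Rabs_pos_eq; lra) (z / (K + 1)) ltac:(apply Rdiv_lt_0_compat; lra)) as [k Hk].
  specialize (Hk k (le_n k)). rewrite Rabs_pos_eq in Hk by (apply pow_le; lra).
  specialize (H k).
  assert (c ^ k * K <= z / (K + 1) * K) by (apply Rmult_le_compat_r; lra).
  assert (z / (K + 1) * K < z).
  { apply Rmult_lt_reg_r with (K + 1). lra.
    replace (z / (K + 1) * K * (K + 1)) with (z * K) by (field; lra). nra. }
  lra.
Qed.

Lemma zero_of_small c K z : 0 <= c < 1 -> 0 <= K -> (forall k, Rabs z <= c ^ k * K) -> z = 0.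
Proof.
  intros Hc HK H. pose proof (le_of_small c K (Rabs z) Hc HK H).
  pose proof (Rabs_pos z). apply Rabs_eq_0. lra.
Qed.


Lemma abs3 A B C : Rabs (A + B - C) <= Rabs A + Rabs B + Rabs C.
Proof.
  unfold Rminus. eapply Rle_trans. apply Rabs_triang. rewrite Rabs_Ropp.
  pose proof (Rabs_triang A B). lra.
Qed.

Section Fractal.
Variables (N : nat) (xs a b : nat -> R) (alpha : nat -> R -> R) (q : R) (n : nat) (c : R).
Hypothesis HN : (2 <= N)%nat.
Hypothesis Hpart : forall i, (1 <= i < N)%nat -> xs i < xs (S i).
Hypothesis Hu : forall i, (1 <= i <= N - 1)%nat ->
          a i * xs 1%nat + b i = xs i /\ a i * xs N + b i = xs (S i).
Hypothesis Halpha_cont : forall i, (1 <= i <= N - 1)%nat -> cont_on (xs 1%nat) (xs N) (alpha i).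
Hypothesis Hc1 : c < 1.
Hypothesis Hcb : forall i, (1 <= i <= N - 1)%nat -> forall x, xs 1%nat <= x <= xs N ->
        Rabs (alpha i x) <= c.
Hypothesis Hq : 0 < q <= 1.
Hypothesis Hn : (1 <= n)%nat.

Definition X1 := xs 1%nat.
Definition XN := xs N.

Lemma xs_mono i j : (1 <= i <= j)%nat -> (j <= N)%nat -> xs i <= xs j.
Proof.
  intros Hij HjN. induction j.
  - lia.
  - destruct (Nat.eq_dec i (S j)) as [->|ne]. lra.
    assert (xs i <= xs j) by (apply IHj; lia).
    assert (xs j < xs (S j)) by (apply Hpart; lia). lra.
Qed.

Lemma SN1 : S (N - 1) = N.
Proof. lia. Qed.

Lemma HX : X1 < XN.
Proof.
  unfold X1, XN. apply Rlt_le_trans with (xs 2%nat). apply Hpart; lia. apply xs_mono; lia.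
Qed.

Lemma Hc0 : 0 <= c.
Proof.
  pose proof (Hcb 1%nat ltac:(lia) X1 ltac:(pose proof HX; unfold X1, XN in *; lra)).
  pose proof (Rabs_pos (alpha 1%nat X1)). lra.
Qed.

Definition u i x := a i * x + b i.
Definition v i y := (y - b i) / a i.

Lemma a_pos i : (1 <= i <= N - 1)%nat -> 0 < a i.
Proof.
  intros Hi. destruct (Hu i Hi) as [H1 H2].
  assert (xs i < xs (S i)) by (apply Hpart; lia).
  pose proof HX. unfold X1, XN in *. nra.
Qed.

Lemma uv i y : (1 <= i <= N - 1)%nat -> u i (v i y) = y.
Proof. intros Hi. pose proof (a_pos i Hi). unfold u, v. field. lra. Qed.

Lemma vu i x : (1 <= i <= N - 1)%nat -> v i (u i x) = x.
Proof. intros Hi. pose proof (a_pos i Hi). unfold u, v. field. lra. Qed.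

Lemma u_piece i x : (1 <= i <= N - 1)%nat -> X1 <= x <= XN -> xs i <= u i x <= xs (S i).
Proof.
  intros Hi Hx. destruct (Hu i Hi) as [H1 H2]. pose proof (a_pos i Hi).
  unfold X1, XN in *. unfold u. split; nra.
Qed.

Lemma u_in i x : (1 <= i <= N - 1)%nat -> X1 <= x <= XN -> X1 <= u i x <= XN.
Proof.
  intros Hi Hx. pose proof (u_piece i x Hi Hx).
  assert (X1 <= xs i) by (apply xs_mono; lia).
  assert (xs (S i) <= XN) by (apply xs_mono; lia). lra.
Qed.

Lemma v_in i y : (1 <= i <= N - 1)%nat -> xs i <= y <= xs (S i) -> X1 <= v i y <= XN.
Proof.
  intros Hi Hy. destruct (Hu i Hi) as [H1 H2]. pose proof (a_pos i Hi).
  unfold X1, XN in *. unfold v. split.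
  - apply Rmult_le_reg_r with (a i); auto. unfold Rdiv. rewrite Rmult_assoc, Rinv_l; lra.
  - apply Rmult_le_reg_r with (a i); auto. unfold Rdiv. rewrite Rmult_assoc, Rinv_l; lra.
Qed.

Definition idxP y i := (1 <= i <= N - 1)%nat /\ xs i <= y <= xs (S i).

Lemma idx_exists y : X1 <= y <= XN -> exists i, idxP y i.
Proof.
  intros Hy.
  assert (Hm : forall m, (1 <= m <= N - 1)%nat -> X1 <= y <= xs (S m) -> exists i, idxP y i).
  { intro m. induction m; intros Hm Hym. lia.
    destruct (Rle_dec y (xs (S m))) as [Hle|Hgt].
    - destruct (Nat.eq_dec m 0) as [->|ne].
      + exists 1%nat. split. lia. unfold X1 in Hym. lra.
      + apply IHm; [lia| lra].
    - exists (S m). split. lia. lra. }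
  apply (Hm (N - 1)%nat). lia. rewrite SN1. exact Hy.
Qed.

Definition idx y := epsilon (inhabits 1%nat) (idxP y).

Lemma idx_spec y : X1 <= y <= XN -> idxP y (idx y).
Proof. intros Hy. unfold idx. apply epsilon_spec. apply idx_exists; auto. Qed.

Lemma decomp y : X1 <= y <= XN ->
  (1 <= idx y <= N - 1)%nat /\ X1 <= v (idx y) y <= XN /\ y = u (idx y) (v (idx y) y).
Proof.
  intros Hy. destruct (idx_spec y Hy) as [Hi Hyi]. split; auto. split.
  apply v_in; auto. rewrite uv; auto.
Qed.

Section WithF.
Variable f : R -> R.
Hypothesis Hf : cont_on X1 XN f.

Definition Mf := MKZ X1 XN q n f.

Lemma Mf_cont : cont_on X1 XN Mf.
Proof. apply MKZ_cont; auto. apply HX. Qed.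

Definition T (h : R -> R) (y : R) : R :=
  f y + alpha (idx y) (v (idx y) y) * (h (v (idx y) y) - Mf (v (idx y) y)).

Definition endpts (h : R -> R) := h X1 = f X1 /\ h XN = f XN.

Lemma T_u h : endpts h -> forall i x, (1 <= i <= N - 1)%nat -> X1 <= x <= XN ->
  T h (u i x) = f (u i x) + alpha i x * (h x - Mf x).
Proof.
  intros [E1 EN] i x Hi Hx. unfold T.
  set (y := u i x).
  assert (Hy : X1 <= y <= XN) by (apply u_in; auto).
  destruct (idx_spec y Hy) as [Hj Hyj].
  set (j := idx y) in *.
  pose proof (u_piece i x Hi Hx) as Hyi. fold y in Hyi.
  assert (Mf1 : Mf X1 = f X1) by (apply MKZ_x1; auto; apply HX).
  assert (MfN : Mf XN = f XN) by (apply MKZ_xN).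
  destruct (Compare_dec.lt_eq_lt_dec j i) as [[Hlt|Heq]|Hgt].
  - assert (xs (S j) <= xs i) by (apply xs_mono; lia).
    assert (Ey : y = xs i) by lra.
    assert (Ex : x = X1).
    { destruct (Hu i Hi) as [H1 _]. pose proof (a_pos i Hi). unfold y, u in Ey. unfold X1.
      apply Rmult_eq_reg_l with (a i); lra. }
    assert (Evy : v j y = XN).
    { destruct (Hu j Hj) as [_ H2]. rewrite <- (vu j XN Hj). f_equal. unfold u. unfold XN. lra. }
    rewrite Evy, Ex, EN, MfN, E1, Mf1. ring.
  - rewrite Heq. unfold y. rewrite vu; auto.
  - assert (xs (S i) <= xs j) by (apply xs_mono; lia).
    assert (Ey : y = xs (S i)) by lra.
    assert (Ex : x = XN).
    { destruct (Hu i Hi) as [_ H2]. pose proof (a_pos i Hi). unfold y, u in Ey. unfold XN.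
      apply Rmult_eq_reg_l with (a i); lra. }
    assert (Evy : v j y = X1).
    { destruct (Hu j Hj) as [H1 _]. rewrite <- (vu j X1 Hj). f_equal. unfold u. unfold X1. lra. }
    rewrite Evy, Ex, EN, MfN, E1, Mf1. ring.
Qed.

Lemma glue_all (H : R -> R) :
  (forall i, (1 <= i <= N - 1)%nat -> cont_on X1 XN (fun x => H (u i x))) -> cont_on X1 XN H.
Proof.
  intros Hi.
  assert (Hpiece : forall i, (1 <= i <= N - 1)%nat -> cont_on (xs i) (xs (S i)) H).
  { intros i Hi'. pose proof (a_pos i Hi').
    apply (cont_on_ext _ _ (fun y => (fun x => H (u i x)) (/ a i * y + (- b i / a i)))).
    { intros y Hy. simpl. f_equal. rewrite <- (uv i y Hi') at 2. unfold v. f_equal. field. lra. }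
    apply (cont_on_affine _ _ X1 XN (fun x => H (u i x))); auto.
    intros y Hy. replace (/ a i * y + - b i / a i) with (v i y) by (unfold v; field; lra).
    apply v_in; auto. }
  assert (Hm : forall m, (1 <= m <= N - 1)%nat -> cont_on X1 (xs (S m)) H).
  { intro m. induction m; intros Hm. lia.
    destruct (Nat.eq_dec m 0) as [->|ne]. apply Hpiece; lia.
    apply cont_on_glue with (xs (S m)).
    split. apply xs_mono; lia. apply Rlt_le, Hpart; lia.
    apply IHm; lia. apply Hpiece; lia. }
  unfold XN. rewrite <- SN1. apply Hm. lia.
Qed.

Lemma T_cont h : endpts h -> cont_on X1 XN h -> cont_on X1 XN (T h).
Proof.
  intros He Hh. apply glue_all. intros i Hi.
  apply (cont_on_ext _ _ (fun x => f (u i x) + alpha i x * (h x - Mf x))).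
  { intros x Hx. symmetry. apply T_u; auto. }
  apply cont_on_plus.
  - apply (cont_on_affine _ _ X1 XN f (a i) (b i)); auto. intros. apply u_in; auto.
  - apply cont_on_mult. pose proof HX; lra. apply Halpha_cont; auto.
    apply cont_on_minus; auto. apply Mf_cont.
Qed.

Lemma T_endpts h : endpts h -> endpts (T h).
Proof.
  intros He. pose proof HX as HX'.
  split.
  - destruct (Hu 1%nat ltac:(lia)) as [H1 _].
    assert (E : X1 = u 1 X1) by (unfold u, X1 in *; lra).
    rewrite E at 1. rewrite T_u; auto; [|lia|lra]. rewrite <- E.
    destruct He as [E1 _]. rewrite E1. unfold Mf. rewrite (MKZ_x1 X1 XN q n); auto. ring.
  - destruct (Hu (N - 1)%nat ltac:(lia)) as [_ H2]. rewrite SN1 in H2.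
    assert (E : XN = u (N - 1) XN) by (unfold u, XN in *; lra).
    rewrite E at 1. rewrite T_u; auto; [|lia|lra]. rewrite <- E.
    destruct He as [_ EN]. rewrite EN. unfold Mf. rewrite MKZ_xN. ring.
Qed.

Fixpoint hs (k : nat) : R -> R :=
  match k with O => f | S k' => T (hs k') end.

Lemma hs_inv k : endpts (hs k) /\ cont_on X1 XN (hs k).
Proof.
  induction k; simpl.
  - split; auto. split; reflexivity.
  - destruct IHk. split. apply T_endpts; auto. apply T_cont; auto.
Qed.


Lemma hs_step k y : hs (S (S k)) y - hs (S k) y =
  alpha (idx y) (v (idx y) y) * (hs (S k) (v (idx y) y) - hs k (v (idx y) y)).
Proof. simpl. unfold T. ring. Qed.

Variable D : R.
Hypothesis HD : forall y, X1 <= y <= XN -> Rabs (hs 1 y - hs 0 y) <= D.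

Lemma D_pos : 0 <= D.
Proof. pose proof HX. eapply Rle_trans; [apply Rabs_pos| apply (HD X1); lra]. Qed.

Lemma diff_bound k : forall y, X1 <= y <= XN -> Rabs (hs (S k) y - hs k y) <= c ^ k * D.
Proof.
  induction k; intros y Hy.
  - simpl pow. rewrite Rmult_1_l. apply HD; auto.
  - rewrite hs_step. destruct (decomp y Hy) as [Hi [Hv _]].
    rewrite Rabs_mult. simpl pow. rewrite Rmult_assoc.
    apply Rmult_le_compat; try apply Rabs_pos. apply Hcb; auto. apply IHk; auto.
Qed.

Definition diff y j := hs (S j) y - hs j y.
Definition glim y := f y + Series (diff y).

Lemma ex_tail y k : X1 <= y <= XN -> ex_series (fun j => Rabs (diff y (k + j))).
Proof.
  intros Hy. pose proof Hc0. pose proof D_pos.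
  apply (@ex_series_le R_AbsRing R_CompleteNormedModule _ (fun j => c ^ k * D * c ^ j)).
  - intro j. unfold norm; simpl. unfold abs; simpl. rewrite Rabs_Rabsolu.
    unfold diff. eapply Rle_trans. apply diff_bound; auto. rewrite pow_add. right; ring.
  - apply exs_scal. apply ex_series_geom. rewrite Rabs_pos_eq; lra.
Qed.

Lemma glim_tail_eq y k : X1 <= y <= XN -> glim y - hs k y = Series (fun j => diff y (k + j)).
Proof.
  intros Hy. induction k.
  - unfold glim. simpl. ring_simplify. apply Series_ext. intro; reflexivity.
  - assert (Hex : ex_series (fun j => diff y (k + j))).
    { apply ex_series_Rabs. apply ex_tail; auto. }
    rewrite Series_incr_1 in IHk by auto.
    rewrite (Series_ext (fun j => diff y (k + S j)) (fun j => diff y (S k + j))) in IHk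
      by (intro j; f_equal; lia).
    rewrite Nat.add_0_r in IHk. unfold diff at 1 in IHk. lra.
Qed.

Definition E := D / (1 - c).

Lemma E_pos : 0 <= E.
Proof. unfold E. apply Rdiv_le_0_compat. apply D_pos. lra. Qed.

Lemma glim_tail y k : X1 <= y <= XN -> Rabs (glim y - hs k y) <= c ^ k * E.
Proof.
  intros Hy. rewrite glim_tail_eq by auto. pose proof Hc0. pose proof D_pos.
  eapply Rle_trans. apply Series_Rabs. apply ex_tail; auto.
  eapply Rle_trans. apply (Series_le _ (fun j => c ^ k * D * c ^ j)).
  - intro j. split. apply Rabs_pos. unfold diff. eapply Rle_trans. apply diff_bound; auto.
    rewrite pow_add. right; ring.
  - apply exs_scal. apply ex_series_geom. rewrite Rabs_pos_eq; lra.
  - rewrite Series_scal_l. change (pow c) with (fun j => c ^ j). rewrite (is_series_unique _ _ (is_series_geom c ltac:(rewrite Rabs_pos_eq; lra))).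
    unfold E. right. field. lra.
Qed.

Lemma glim_cont : cont_on X1 XN glim.
Proof.
  intros x Hx eps He. pose proof Hc0. pose proof E_pos.
  destruct (pow_lt_1_zero c ltac:(rewrite Rabs_pos_eq; lra) (eps / 3 / (E + 1)) ltac:(apply Rdiv_lt_0_compat; lra)) as [k Hk].
  specialize (Hk k (le_n k)). rewrite Rabs_pos_eq in Hk by (apply pow_le; lra).
  assert (HkE : c ^ k * E < eps / 3).
  { apply Rle_lt_trans with (eps / 3 / (E + 1) * E). apply Rmult_le_compat_r; lra.
    apply Rmult_lt_reg_r with (E + 1). lra.
    replace (eps / 3 / (E + 1) * E * (E + 1)) with (eps / 3 * E) by (field; lra). nra. }
  destruct (proj2 (hs_inv k) x Hx (eps / 3) ltac:(lra)) as [d [Hd Hy]].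
  exists d. split; auto. intros y Hyy Hyd.
  specialize (Hy y Hyy Hyd).
  pose proof (glim_tail y k Hyy). pose proof (glim_tail x k Hx).
  replace (glim y - glim x) with ((glim y - hs k y) + (hs k y - hs k x) - (glim x - hs k x)) by ring.
  eapply Rle_lt_trans. apply abs3. lra.
Qed.

Lemma glim_eq i x : (1 <= i <= N - 1)%nat -> X1 <= x <= XN ->
  glim (u i x) = f (u i x) + alpha i x * (glim x - Mf x).
Proof.
  intros Hi Hx. apply Rminus_diag_uniq. pose proof Hc0. pose proof E_pos.
  apply (zero_of_small c (2 * E)); [lra | lra | intro k].
  pose proof (T_u (hs k) (proj1 (hs_inv k)) i x Hi Hx) as HT.
  change (T (hs k) (u i x)) with (hs (S k) (u i x)) in HT.
  replace (glim (u i x) - (f (u i x) + alpha i x * (glim x - Mf x)))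
    with ((glim (u i x) - hs (S k) (u i x)) + alpha i x * (hs k x - glim x)) by (rewrite HT; ring).
  eapply Rle_trans. apply Rabs_triang. rewrite Rabs_mult.
  pose proof (glim_tail (u i x) (S k) (u_in i x Hi Hx)) as G1.
  pose proof (glim_tail x k Hx) as G2. rewrite <- Rabs_Ropp, Ropp_minus_distr in G2.
  pose proof (Hcb i Hi x Hx). pose proof (pow_le c k H).
  assert (Rabs (alpha i x) * Rabs (hs k x - glim x) <= c * (c ^ k * E)).
  { apply Rmult_le_compat; auto using Rabs_pos. }
  simpl pow in G1.
  assert (c * c ^ k * E <= c ^ k * E). { assert (c ^ k * E >= 0) by nra. nra. }
  nra.
Qed.

Lemma glim_fractal : is_qMKZ_fractal N xs a b alpha q n f glim.
Proof.
  split. apply glim_cont. intros i Hi x Hx. apply (glim_eq i x Hi Hx).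
Qed.

End WithF.

Lemma fractal_exists f : cont_on X1 XN f -> exists g, is_qMKZ_fractal N xs a b alpha q n f g.
Proof.
  intros Hf.
  destruct (cont_bounded X1 XN (fun y => hs f 1 y - hs f 0 y)) as [D HD].
  { pose proof HX; lra. }
  { apply cont_on_minus; apply (hs_inv f Hf). }
  eexists. eapply glim_fractal; eauto.
Qed.

Lemma fractal_unique f g1 g2 : is_qMKZ_fractal N xs a b alpha q n f g1 ->
  is_qMKZ_fractal N xs a b alpha q n f g2 -> forall y, X1 <= y <= XN -> g1 y = g2 y.
Proof.
  intros [C1 E1] [C2 E2].
  destruct (cont_bounded X1 XN (fun y => g1 y - g2 y)) as [B HB].
  { pose proof HX; lra. }
  { apply cont_on_minus; auto. }
  pose proof Hc0.
  assert (HB0 : 0 <= B) by (pose proof HX; eapply Rle_trans; [apply Rabs_pos| apply (HB X1); lra]).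
  assert (Hk : forall k y, X1 <= y <= XN -> Rabs (g1 y - g2 y) <= c ^ k * B).
  { induction k; intros y Hy.
    - simpl. rewrite Rmult_1_l. auto.
    - destruct (decomp y Hy) as [Hi [Hv Hyu]].
      set (j := idx y) in *. set (x := v j y) in *.
      rewrite Hyu. unfold u. rewrite (E1 j Hi x Hv), (E2 j Hi x Hv).
      replace (f (a j * x + b j) + alpha j x * (g1 x - MKZ (xs 1%nat) (xs N) q n f x) -
        (f (a j * x + b j) + alpha j x * (g2 x - MKZ (xs 1%nat) (xs N) q n f x)))
        with (alpha j x * (g1 x - g2 x)) by ring.
      rewrite Rabs_mult. simpl pow. rewrite Rmult_assoc.
      apply Rmult_le_compat; auto using Rabs_pos. }
  intros y Hy. apply Rminus_diag_uniq. apply (zero_of_small c B); [lra | lra | intro k; apply Hk; auto].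
Qed.

Lemma fractal_bound f g M : cont_on X1 XN f -> is_qMKZ_fractal N xs a b alpha q n f g ->
  (forall y, X1 <= y <= XN -> Rabs (f y) <= M) ->
  forall y, X1 <= y <= XN -> Rabs (g y) <= (1 + c) / (1 - c) * M.
Proof.
  intros Hf [C1 E1] HM.
  pose proof HX as HX'.
  destruct (cont_bounded X1 XN g) as [B HB]; [lra| auto|].
  pose proof Hc0.
  assert (HB0 : 0 <= B) by (eapply Rle_trans; [apply Rabs_pos| apply (HB X1); lra]).
  assert (HM0 : 0 <= M) by (eapply Rle_trans; [apply Rabs_pos| apply (HM X1); lra]).
  set (K := (1 + c) / (1 - c) * M).
  assert (HK : M + c * (K + M) = K).
  { unfold K. field. lra. }
  assert (HK0 : 0 <= K). { unfold K. apply Rmult_le_pos; auto. apply Rdiv_le_0_compat; lra. }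
  assert (Hk : forall k y, X1 <= y <= XN -> Rabs (g y) <= c ^ k * B + K).
  { induction k; intros y Hy.
    - simpl. pose proof (HB y Hy). lra.
    - destruct (decomp y Hy) as [Hi [Hv Hyu]].
      set (j := idx y) in *. set (x := v j y) in *.
      rewrite Hyu. unfold u. rewrite (E1 j Hi x Hv).
      eapply Rle_trans. apply Rabs_triang. rewrite Rabs_mult.
      pose proof (HM (a j * x + b j) (u_in j x Hi Hv)).
      pose proof (Hcb j Hi x Hv).
      assert (Rabs (g x - MKZ (xs 1%nat) (xs N) q n f x) <= c ^ k * B + K + M).
      { unfold Rminus. eapply Rle_trans. apply Rabs_triang. rewrite Rabs_Ropp.
        pose proof (IHk x Hv). pose proof (MKZ_bound X1 XN q n HX Hq Hn f M x HM Hv).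
        unfold X1, XN in *. lra. }
      assert (Rabs (alpha j x) * Rabs (g x - MKZ (xs 1%nat) (xs N) q n f x) <= c * (c ^ k * B + K + M)).
      { apply Rmult_le_compat; auto using Rabs_pos. }
      simpl pow. lra. }
  intros y Hy. fold K.
  assert (Rabs (g y) - K <= 0).
  { apply (le_of_small c B); [lra | lra | intro k; specialize (Hk k y Hy); lra]. }
  lra.
Qed.

End Fractal.


Theorem theorem3p2
  (N : nat) (xs a b : nat -> R) (alpha : nat -> R -> R) (q : R)
  (HN : (2 <= N)%nat)
  (Hpart : forall i, (1 <= i < N)%nat -> xs i < xs (S i))
  (Hu : forall i, (1 <= i <= N - 1)%nat ->
          a i * xs 1%nat + b i = xs i /\ a i * xs N + b i = xs (S i))
  (Halpha_cont : forall i, (1 <= i <= N - 1)%nat -> cont_on (xs 1%nat) (xs N) (alpha i))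
  (Halpha_norm : exists c, c < 1 /\
      forall i, (1 <= i <= N - 1)%nat -> forall x, xs 1%nat <= x <= xs N ->
        Rabs (alpha i x) <= c)
  (Hq : 0 < q <= 1) :
  forall n : nat, (1 <= n)%nat ->
    (* F maps C(I) into C(I) *)
    (forall f, cont_on (xs 1%nat) (xs N) f ->
       cont_on (xs 1%nat) (xs N) (qMKZ_op N xs a b alpha q n f)) /\
    (* linearity *)
    (forall (f g : R -> R) (s t : R),
       cont_on (xs 1%nat) (xs N) f -> cont_on (xs 1%nat) (xs N) g ->
       forall x, xs 1%nat <= x <= xs N ->
         qMKZ_op N xs a b alpha q n (fun y => s * f y + t * g y) x
         = s * qMKZ_op N xs a b alpha q n f x + t * qMKZ_op N xs a b alpha q n g x) /\
    (* boundedness w.r.t. the sup-norm on I *)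
    (exists C, 0 <= C /\
       forall f, cont_on (xs 1%nat) (xs N) f ->
       forall M, (forall y, xs 1%nat <= y <= xs N -> Rabs (f y) <= M) ->
       forall x, xs 1%nat <= x <= xs N ->
         Rabs (qMKZ_op N xs a b alpha q n f x) <= C * M).
Proof.
  intros n Hn.
  destruct Halpha_norm as [c [Hc1 Hcb]].
  assert (HX0 : X1 xs < XN N xs) by (eapply HX; eauto). pose proof HX0 as HX'. unfold X1, XN in HX'.
  assert (Hc0 : 0 <= c).
  { pose proof (Hcb 1%nat ltac:(lia) (xs 1%nat) ltac:(lra)). pose proof (Rabs_pos (alpha 1%nat (xs 1%nat))). lra. }
  assert (Hspec : forall f, cont_on (xs 1%nat) (xs N) f ->
     is_qMKZ_fractal N xs a b alpha q n f (qMKZ_op N xs a b alpha q n f)).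
  { intros f Hf. unfold qMKZ_op. apply epsilon_spec.
    apply (fractal_exists N xs a b alpha q n c); auto. }
  split; [| split].
  - intros f Hf. apply (Hspec f Hf).
  - intros f g s t Hf Hg x Hx.
    destruct (cont_bounded (xs 1%nat) (xs N) f ltac:(lra) Hf) as [Mf HMf].
    destruct (cont_bounded (xs 1%nat) (xs N) g ltac:(lra) Hg) as [Mg HMg].
    set (H := fun y => s * qMKZ_op N xs a b alpha q n f y + t * qMKZ_op N xs a b alpha q n g y).
    assert (Hcont : cont_on (xs 1%nat) (xs N) (fun y => s * f y + t * g y)).
    { apply cont_on_plus; apply cont_on_scal; auto. }
    assert (HH : is_qMKZ_fractal N xs a b alpha q n (fun y => s * f y + t * g y) H).
    { destruct (Hspec f Hf) as [Cf Ef]. destruct (Hspec g Hg) as [Cg Eg].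
      split.
      - apply cont_on_plus; apply cont_on_scal; auto.
      - intros i Hi y Hy. unfold H. rewrite (Ef i Hi y Hy), (Eg i Hi y Hy).
        rewrite (MKZ_lin (xs 1%nat) (xs N) q n HX' Hq Hn f g Mf Mg s t y HMf HMg Hy).
        ring. }
    symmetry. apply (fractal_unique N xs a b alpha q n c HN Hpart Hu Hc1 Hcb Hn
       (fun y => s * f y + t * g y) H); auto.
  - exists ((1 + c) / (1 - c)). split.
    { apply Rdiv_le_0_compat; lra. }
    intros f Hf M HM x Hx.
    apply (fractal_bound N xs a b alpha q n c HN Hpart Hu Hc1 Hcb Hq Hn f); auto.
Qed.
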